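(* Let $\theta:H\to H$ be an endomorphism and let $E$ be a proper hyperideal of $H$. If $E$ is an $n$-ary Endo-prime hyperideal associated with $\theta$, then $rad(E)$ is an $n$-ary Endo-prime hyperideal associated with $\theta$.
   Context: Throughout, $(H,h,k)$ is a commutative Krasner $(m,n)$-hyperring with scalar identity $1_H$: $(H,h)$ is a canonical $m$-ary hypergroup (a commutative associative $m$-ary hyperoperation $h:H^m\to\mathcal P^*(H)$ with a unique zero $0$ such that $h(u,0^{(m-1)})=\{u\}$, unique inverses $u^{-1}$ with $0\in h(u,u^{-1},0^{(m-2)})$, and the reversibility axiom), $k:H^n\to H$ is a commutative associative $n$-ary operation that distributes over $h$ in each argument, $k(0,u_2^n)=0$, and $k(u,1_H^{(n-1)})=u$ for all $u\in H$. Notation: $u_i^j$ denotes the sequence $u_i,\dots,u_j$ (empty if $j<i$); $u^{(t)}$ denotes $u$ repeated $t$ times; for $r=l(n-1)+1$, $k_{(l)}(u_1^r)=k(k(\cdots k(k(u_1^n),u_{n+1}^{2n-1})\cdots),u_{r-n+1}^{r})$ ($l$ nested applications of $k$). Operations are extended to subsets elementwise. A hyperideal of $H$ is a nonempty $I\subseteq H$ such that $(I,h)$ is an $m$-ary subhypergroup of $(H,h)$ and $k(u_1^{i-1},I,u_{i+1}^n)\subseteq I$ for all $u_j\in H$. An endomorphism of $H$ is a map $\theta:H\to H$ with $\theta(h(u_1^m))=h(\theta(u_1),\dots,\theta(u_m))$, $\theta(k(u_1^n))=k(\theta(u_1),\dots,\theta(u_n))$ and $\theta(1_H)=1_H$.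 ''A power of $u$ lies in $E$'' means $k(u^{(r)},1_H^{(n-r)})\in E$ for some $r\le n$, or $k_{(l)}(u^{(r)})\in E$ for some $r=l(n-1)+1>n$. A proper hyperideal $P$ is an $n$-ary prime hyperideal if $k(u_1^n)\in P$ ($u_i\in H$) implies $u_i\in P$ for some $i$. The radical $rad(E)$ is the intersection of all $n$-ary prime hyperideals containing $E$ ($rad(E)=H$ if there are none); equivalently $rad(E)=\{u\in H:\text{a power of }u\text{ lies in }E\}$. For an endomorphism $\theta$, a proper hyperideal $E$ of $H$ is an $n$-ary Endo-prime hyperideal associated with $\theta$ if for all $u_1,\dots,u_n\in H$, $k(u_1^n)\in E$ implies that for some $i\in\{1,\dots,n\}$, $u_i\in E$ or $\theta\big(k(u_1^{i-1},1_H,u_{i+1}^n)\big)\in E$. *)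

(* Defs.v *)
(* A Krasner (m,n)-hyperring is encoded by explicit data:
     h : seq H -> (H -> Prop)   the m-ary hyperoperation (meaningful on lists of size m)
     k : seq H -> H             the n-ary operation (meaningful on lists of size n)
     zr : H                     the zero,  one : H  the scalar identity 1_H.
   Subsets of H are predicates H -> Prop.  Indices are 0-based. *)
From Stdlib Require Import Sorting.Permutation.
From mathcomp Require Import all_boot.

Set Implicit Arguments.
Unset Strict Implicit.
Unset Printing Implicit Defensive.

Section Hyperring.
Variables (H : Type) (m n : nat) (h : seq H -> H -> Prop) (k : seq H -> H)
          (zr one : H).

Definition hS (L : seq (H -> Prop)) (w : H) : Prop :=
  exists l : seq H, List.Forall2 (fun x A => A x) l L /\ h l w.

Definition sing (x : H) : H -> Prop := fun y => y = x.

Definition is_inv (u v : H) : Prop := h [:: u, v & nseq (m - 2) zr] zr.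

Definition canonical_mary_hypergroup : Prop :=
  (forall s, size s = m -> exists w, h s w) /\
  (forall x : seq H, size x = (2 * m - 1)%N -> forall i j, i < m -> j < m ->
     forall w,
       hS (map sing (take i x) ++ [:: h (take m (drop i x))] ++ map sing (drop (i + m) x)) w
       <->
       hS (map sing (take j x) ++ [:: h (take m (drop j x))] ++ map sing (drop (j + m) x)) w) /\
  (forall s t, size s = m -> Permutation s t -> forall w, h s w <-> h t w) /\
  (forall u w, h (u :: nseq (m - 1) zr) w <-> w = u) /\
  (forall z', (forall u w, h (u :: nseq (m - 1) z') w <-> w = u) -> z' = zr) /\
  (forall u, exists v, is_inv u v /\ forall v', is_inv u v' -> v' = v) /\
  (forall (u : H) (us ws : seq H), size us = m -> size ws = m ->
     (forall j, j < m -> is_inv (nth zr us j) (nth zr ws j)) ->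
     h us u ->
     forall i, i < m -> h (u :: (take i ws ++ drop i.+1 ws)) (nth zr us i)).

Definition krasner_hyperring : Prop :=
  canonical_mary_hypergroup /\
  (forall s t, size s = n -> Permutation s t -> k s = k t) /\
  (forall x : seq H, size x = (2 * n - 1)%N -> forall i j, i < n -> j < n ->
     k (take i x ++ [:: k (take n (drop i x))] ++ drop (i + n) x) =
     k (take j x ++ [:: k (take n (drop j x))] ++ drop (j + n) x)) /\
  (forall (us xs : seq H) i, size us = n -> size xs = m -> i < n ->
     forall w, (exists y, h xs y /\ w = k (set_nth zr us i y)) <->
               h (map (fun x => k (set_nth zr us i x)) xs) w) /\
  (forall us, size us = (n - 1)%N -> k (zr :: us) = zr) /\
  (forall u, k (u :: nseq (n - 1) one) = u).

Definition subhypergroup (I : H -> Prop) : Prop :=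
  (forall s, size s = m -> (forall j, j < m -> I (nth zr s j)) -> forall w, h s w -> I w) /\
  (forall s, size s = m -> (forall j, j < m -> I (nth zr s j)) -> forall i, i < m ->
     forall w, I w <-> exists y, I y /\ h (set_nth zr s i y) w).

Definition hyperideal (I : H -> Prop) : Prop :=
  (exists x, I x) /\ subhypergroup I /\
  (forall us i x, size us = n -> i < n -> I x -> I (k (set_nth zr us i x))).

Definition proper_subset (I : H -> Prop) : Prop := exists u, ~ I u.

Definition endomorphism (th : H -> H) : Prop :=
  (forall us, size us = m -> forall w,
     (exists y, h us y /\ w = th y) <-> h (map th us) w) /\
  (forall us, size us = n -> th (k us) = k (map th us)) /\
  th one = one.

Definition nary_prime (P : H -> Prop) : Prop :=
  hyperideal P /\ proper_subset P /\
  forall us, size us = n -> P (k us) -> exists2 i, i < n & P (nth zr us i).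

(* rad(E) = intersection of all n-ary prime hyperideals containing E
   (= H when there is none) *)
Definition rad (E : H -> Prop) : H -> Prop :=
  fun u => forall P, nary_prime P -> (forall x, E x -> P x) -> P u.

Definition endo_prime (th : H -> H) (E : H -> Prop) : Prop :=
  hyperideal E /\ proper_subset E /\
  forall us, size us = n -> E (k us) ->
    exists2 i, i < n & (E (nth zr us i) \/ E (th (k (set_nth zr us i one)))).

End Hyperring.

(* Main.v *)
From Stdlib Require Import Sorting.Permutation Classical.
Require Import Defs.
From mathcomp Require Import all_boot.
From mathcomp Require classical_sets.
From mathcomp Require Import zify.
From Stdlib Require Import Lia.

Set Implicit Arguments.
Unset Strict Implicit.
Unset Printing Implicit Defensive.

Lemma set_nth_perm (T : Type) (x0 y : T) (s : seq T) i : i < size s ->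
  Permutation (set_nth x0 s i y) (y :: (take i s ++ drop i.+1 s)).
Proof.
move=> hi; rewrite set_nthE hi; apply: Permutation_sym; apply: Permutation_middle.
Qed.

Lemma nth_rm (T : Type) (x0 : T) (s : seq T) i j :
  nth x0 (take i s ++ drop i.+1 s) j = nth x0 s (if j < i then j else j.+1).
Proof.
elim: s i j => [|a s IH] [|i] [|j] /=.
all: try (by rewrite ?nth_nil ?drop0).
by rewrite IH ltnS; case: ifP.
Qed.

Section Ring.
Variables (H : Type) (m' n' : nat) (h : seq H -> H -> Prop) (k : seq H -> H)
          (zr one : H).
Local Notation M := m'.+2.
Local Notation N := n'.+2.
Hypothesis KR : krasner_hyperring M N h k zr one.

Let CH := KR.1.
Let hne : forall s, size s = M -> exists w, h s w := CH.1.
Let hcomm : forall s t, size s = M -> Permutation s t -> forall w, h s w <-> h t w := CH.2.2.1.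
Let hinv := CH.2.2.2.2.2.1.
Let hrev := CH.2.2.2.2.2.2.
Let kcomm : forall s t, size s = N -> Permutation s t -> k s = k t := KR.2.1.
Let kassoc := KR.2.2.1.
Let kdist := KR.2.2.2.1.
Let kabs := KR.2.2.2.2.1.
Let kid : forall u, k (u :: nseq (N - 1) one) = u := KR.2.2.2.2.2.

Definition mul x y := k [:: x, y & nseq n' one].
Local Notation inv := (is_inv M h zr).

Lemma mulC x y : mul x y = mul y x.
Proof. by apply: kcomm; [rewrite /= size_nseq | apply: perm_swap]. Qed.

Lemma mul1 x : mul x one = x.
Proof. by have := kid x; rewrite subn1. Qed.

Lemma mul0 x : mul zr x = zr.
Proof. by apply: kabs; rewrite /= size_nseq subn1. Qed.

Lemma take_nseq_cat (x : H) j r : take j (nseq j x ++ r) = nseq j x.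
Proof. by elim: j => /= [|j ->]; rewrite ?take0. Qed.
Lemma drop_nseq_cat (x : H) j r : drop j (nseq j x ++ r) = r.
Proof. by elim: j => [|j /= ->]; rewrite ?drop0. Qed.
Lemma nseqSr (x : H) j : nseq j.+1 x = nseq j x ++ [:: x].
Proof. by elim: j => //= j <-. Qed.

Lemma take_nseq_cat1 (x y : H) j r : take j.+1 (nseq j x ++ y :: r) = nseq j x ++ [:: y].
Proof. by elim: j => [|j /= ->] //=; rewrite take0. Qed.
Lemma drop_nseq_cat1 (x y : H) j r : drop j.+1 (nseq j x ++ y :: r) = r.
Proof. by elim: j => [|j /= ->] //=; rewrite drop0. Qed.

Lemma nseq_shift (x : H) j r : x :: nseq j x ++ r = nseq j x ++ x :: r.
Proof. by elim: j => //= j ->. Qed.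

Lemma k_cons a rest : size rest = n'.+1 -> k (a :: rest) = mul a (k (one :: rest)).
Proof.
move=> hs.
have sz : size (a :: nseq n'.+1 one ++ rest) = 2 * N - 1.
  by rewrite /= size_cat size_nseq hs; lia.
have := kassoc sz (i := 0) (j := n'.+1) isT (ltnSn _).
rewrite take0 drop0 /= take_nseq_cat drop_nseq_cat.
rewrite nseq_shift take_nseq_cat drop_nseq_cat /=.
rewrite take_oversize ?hs // drop_oversize; last by rewrite size_cat size_nseq /= hs; lia.
have -> : k [:: a, one & nseq n' one] = a by have := kid a; rewrite subn1.
rewrite /mul => ->; apply: kcomm; first by rewrite /= size_cat size_nseq addn1.
by constructor; rewrite -cat1s; apply: Permutation_app_comm.
Qed.

Lemma mulA a b c : mul a (mul b c) = mul (mul a b) c.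
Proof.
have sz : size ([:: a, b & nseq n' one] ++ c :: nseq n' one) = 2 * N - 1.
  by rewrite /= size_cat /= !size_nseq; lia.
have := kassoc sz (i := 0) (j := 1) isT isT.
rewrite take0 drop0 /= take_nseq_cat drop_nseq_cat /=.
rewrite take_nseq_cat1 drop_nseq_cat1.
move=> E; rewrite /mul in E *; rewrite E.
congr k; congr cons; congr cons.
apply: kcomm; first by rewrite /= size_nseq.
by constructor; apply: Permutation_cons_append.
Qed.

Lemma mulCA a b c : mul a (mul b c) = mul b (mul a c).
Proof. by rewrite mulA (mulC a b) -mulA. Qed.

Definition prod (l : seq H) := foldr mul one l.

Lemma k_prod_gen rest j : j + size rest = N -> k (nseq j one ++ rest) = prod rest.
Proof.
elim: rest j => [|a rest IH] j /=.
  rewrite addn0 cats0 => ->; have := kid one; rewrite subn1 //.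
move=> hs.
rewrite (kcomm (t := a :: (nseq j one ++ rest))); last first.
- by apply: Permutation_sym; apply: Permutation_middle.
- by rewrite size_cat size_nseq.
rewrite k_cons; last by rewrite size_cat size_nseq; move: hs; rewrite addnS; case.
by rewrite -(IH j.+1) // addSn -addnS.
Qed.

Lemma k_prod l : size l = N -> k l = prod l.
Proof. by move=> hs; rewrite -(k_prod_gen (j := 0)) ?hs. Qed.

Lemma prod_perm l1 l2 : Permutation l1 l2 -> prod l1 = prod l2.
Proof.
elim=> //= [x a b _ -> | x y l | a b c _ -> _ ->] //; exact: mulCA.
Qed.

Lemma inv_sym u v : inv u v -> inv v u.
Proof.
rewrite /is_inv => hv.
have sz : size [:: u, v & nseq (M - 2) zr] = M by rewrite /= size_nseq; lia.
by apply: (hcomm sz (perm_swap _ _ _) zr).1.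
Qed.

Lemma inv_uniq u v v' : inv u v -> inv u v' -> v = v'.
Proof.
have [w [_ hw]] := hinv u.
by move=> /hw -> /hw ->.
Qed.

Lemma h_mulr s w b : size s = M -> h s w -> h (map (fun x => mul x b) s) (mul w b).
Proof.
move=> sz hs.
have szu : size [:: zr, b & nseq n' one] = N by rewrite /= size_nseq.
apply: (kdist (us := [:: zr, b & nseq n' one]) (i := 0) szu sz isT (mul w b)).1.
by exists w.
Qed.

Lemma inv_mulr x v b : inv x v -> inv (mul x b) (mul v b).
Proof.
rewrite /is_inv => hv.
have := h_mulr b _ hv; rewrite /= size_nseq mul0 map_nseq mul0.
by apply; lia.
Qed.

Lemma inv_list s : exists ws, size ws = size s /\
  forall j, j < size s -> inv (nth zr s j) (nth zr ws j).
Proof.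
elim: s => [|a s [ws [sz hws]]]; first by exists [::].
have [v [hv _]] := hinv a.
exists (v :: ws); split; first by rewrite /= sz.
by case=> [|j] //= /hws.
Qed.

Definition closed (I : H -> Prop) :=
  I zr /\ (forall x v, I x -> inv x v -> I v) /\
  (forall s, size s = M -> (forall j, j < M -> I (nth zr s j)) -> forall w, h s w -> I w) /\
  (forall x y, I x -> I (mul x y)).

Lemma closed_hyperideal I : closed I -> hyperideal M N h k zr I.
Proof.
move=> [I0 [Iinv [Ih Imul]]].
split; first by exists zr.
split; first split.
- exact: Ih.
- move=> s sz Is i hi w; split.
  + move=> Iw.
    have [ws [szw hws]] := inv_list s.
    rewrite sz in szw hws.
    pose l := w :: (take i ws ++ drop i.+1 ws).
    have szl : size l = M by rewrite /l /= size_cat size_take size_drop szw hi; lia.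
    have [y hy] := hne szl.
    have Il : forall j, j < M -> I (nth zr l j).
      case=> [|j] hj //=; rewrite nth_rm.
      have hj' : (if j < i then j else j.+1) < M by case: ifP => _; lia.
      exact: Iinv (Is _ hj') (hws _ hj').
    exists y; split; first exact: Ih szl Il _ hy.
    have [v [hv _]] := hinv w.
    pose ws' := v :: (take i s ++ drop i.+1 s).
    have szw' : size ws' = M by rewrite /ws' /= size_cat size_take size_drop sz hi; lia.
    have hinvl : forall j, j < M -> inv (nth zr l j) (nth zr ws' j).
      case=> [|j] hj //=; rewrite !nth_rm.
      have hj' : (if j < i then j else j.+1) < M by case: ifP => _; lia.
      exact: inv_sym (hws _ hj').
    have := hrev szl szw' hinvl hy (i := 0) isT.
    rewrite /= drop0 => hh.
    have szs : size (set_nth zr s i y) = M by rewrite size_set_nth sz; apply/maxn_idPr.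
    have hi' : i < size s by rewrite sz.
    exact: (hcomm szs (set_nth_perm zr y hi') w).2 hh.
  + move=> [y [Iy hy]].
    have szs : size (set_nth zr s i y) = M by rewrite size_set_nth sz; apply/maxn_idPr.
    apply: Ih szs _ _ hy => j hj; rewrite nth_set_nth /=; case: ifP => // _; exact: Is.
- move=> us i x szu hi Ix.
  have szs : size (set_nth zr us i x) = N by rewrite size_set_nth szu; apply/maxn_idPr.
  rewrite k_prod // (prod_perm (set_nth_perm zr x (_ : i < size us))) /=; last by rewrite szu.
  exact: Imul.
Qed.

Lemma hyperideal_closed I : hyperideal M N h k zr I -> closed I.
Proof.
move=> [[x0 Ix0] [[hcl hrep] hk]].
have I0 : I zr.
  have := hk (nseq N zr) 1 x0; rewrite size_nseq => /(_ erefl isT Ix0) /=.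
  by rewrite kabs //= size_nseq subn1.
split; first exact: I0.
split.
  move=> x v Ix hv.
  have szs : size (x :: nseq m'.+1 zr) = M by rewrite /= size_nseq.
  have Is : forall j, j < M -> I (nth zr (x :: nseq m'.+1 zr) j).
    by case=> [|[|j]] //= _; rewrite nth_nseq; case: ifP.
  have [y [Iy hy]] := (hrep _ szs Is 1 isT zr).1 I0.
  have hy' : inv x y by rewrite /is_inv (_ : M - 2 = m'); [exact: hy | lia].
  by rewrite (inv_uniq hv hy').
split; first exact: hcl.
move=> x y Ix.
have := hk [:: zr, y & nseq n' one] 0 x; rewrite /= size_nseq.
by move=> /(_ erefl isT Ix).
Qed.

Lemma closed_one P : closed P -> P one -> forall u, P u.
Proof. by move=> [_ [_ [_ Pm]]] P1 u; rewrite -(mul1 u) mulC; apply: Pm. Qed.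

Lemma prod_split (P : H -> Prop) : ~ P one -> (forall a b, P (mul a b) -> P a \/ P b) ->
  forall l, P (prod l) -> exists2 i, i < size l & P (nth zr l i).
Proof.
move=> P1 Pm; elim=> [|a l IH] /=; first by move/P1.
case/Pm => [Pa|/IH [i hi Pi]]; first by exists 0.
by exists i.+1.
Qed.

Lemma prime_mul P a b : nary_prime M N h k zr P -> P (mul a b) -> P a \/ P b.
Proof.
move=> [hP [[u nu] pr]] Pab.
have szl : size [:: a, b & nseq n' one] = N by rewrite /= size_nseq.
have [[|[|i]] hi] := pr [:: a, b & nseq n' one] szl Pab.
- by left.
- by right.
rewrite /= nth_nseq (_ : i < n'); last by move: hi; rewrite !ltnS.
move=> P1; case: nu; exact: closed_one (hyperideal_closed hP) P1 u.
Qed.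

Lemma prime_one P : nary_prime M N h k zr P -> ~ P one.
Proof.
move=> [hP [[u nu] _]] P1; apply: nu; exact: closed_one (hyperideal_closed hP) P1 u.
Qed.

Lemma exists_prime (E S : H -> Prop) : hyperideal M N h k zr E ->
  (forall x y, S x -> S y -> S (mul x y)) -> (exists s, S s) ->
  (forall x, E x -> ~ S x) ->
  exists Q, nary_prime M N h k zr Q /\ (forall x, E x -> Q x) /\ (forall x, Q x -> ~ S x).
Proof.
move=> hE Sm [s0 Ss0] dE.
pose fam (A : H -> Prop) := closed A /\ (forall x, E x -> A x) /\ (forall x, A x -> ~ S x).
pose P := fun A : H -> Prop => (forall x, ~ A x) \/ fam A.
have [A [PA maxA]] : exists A, P A /\ forall B, classical_sets.proper A B -> ~ P B.
  apply: classical_sets.Zorn_bigcup => F FP Ftot.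
  case: (classic (exists X, F X /\ fam X)) => [[X0 [FX0 famX0]] | nofam]; last first.
    left => x [X FX Xx]; case: (FP X FX) => [/(_ x)//|famX].
    by apply: nofam; exists X.
  right.
  have famF : forall X x, F X -> X x -> fam X.
    by move=> X x FX Xx; case: (FP X FX) => [/(_ x)//|].
  have common : forall l : seq H,
      (forall j, j < size l -> exists2 X, F X & X (nth zr l j)) ->
      exists X, F X /\ fam X /\ forall j, j < size l -> X (nth zr l j).
    elim=> [|a l IH] hl; first by exists X0.
    have [Xa FXa Xaa] := hl 0 isT.
    have [X [FX [famX hX]]] : exists X, F X /\ fam X /\ forall j, j < size l -> X (nth zr l j).
      by apply: IH => j hj; apply: (hl j.+1).
    case: (Ftot _ _ FXa FX) => [sub|sub].
    + exists X; split=> //; split=> // [[|j]] //= hj; last exact: hX.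
      exact: sub.
    + exists Xa; split=> //; split; first exact: famF Xaa.
      by case=> [|j] //= hj; apply: sub; apply: hX.
  split; last split.
  - split; first by exists X0 => //; case: famX0 => [[]].
    split; first by move=> x v [X FX Xx] hv; exists X => //; case: (famF _ _ FX Xx) => [[_ [Xi _]] _]; exact: Xi hv.
    split; last by move=> x y [X FX Xx]; exists X => //; case: (famF _ _ FX Xx) => [[_ [_ [_ Xm]]] _]; exact: Xm.
    move=> s sz Us w hs.
    have Us' : forall j, j < size s -> exists2 X, F X & X (nth zr s j).
      by move=> j hj; apply: Us; rewrite -sz.
    have [X [FX [[[_ [_ [Xh _]]] _] hX]]] := common s Us'.
    exists X => //; apply: (Xh s sz) hs => j hj; apply: hX; rewrite sz; exact: hj.
  - by move=> x Ex; exists X0 => //; case: famX0 => [_ [EX _]]; exact: EX.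
  - by move=> x [X FX Xx]; case: (famF _ _ FX Xx) => [_ [_ dX]]; exact: dX.
have famA : fam A.
  case: PA => // empt; exfalso.
  have [[e Ee] _] := hE.
  apply: (maxA E); first by split=> [x /empt|/(_ e Ee)/empt].
  by right; split; [exact: hyperideal_closed | split].
have [clA [EA dA]] := famA.
have [A0 [Ainv [Ah Am]]] := clA.
have colon : forall a b, A (mul a b) -> ~ A a -> exists s, S s /\ A (mul s b).
  move=> a b Aab nAa; apply: NNPP => no.
  pose C := fun x => A (mul x b).
  apply: (maxA C).
    split; first by move=> x Ax; exact: Am.
    by move=> /(_ a Aab).
  right; split; last split.
  - split; first by rewrite /C mul0.
    split; first by move=> x v Cx hv; apply: Ainv Cx (inv_mulr b hv).
    split; last by move=> x y Cx; rewrite /C -mulA (mulC y b) mulA; exact: Am.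
    move=> s sz Cs w hs; apply: Ah (h_mulr b sz hs).
      by rewrite size_map.
    by move=> j hj; rewrite (nth_map zr) ?sz //; apply: Cs.
  - by move=> x Ex; apply: Am; exact: EA.
  - by move=> x Cx Sx; apply: no; exists x.
have bin : forall a b, A (mul a b) -> A a \/ A b.
  move=> a b Aab; apply: NNPP => /not_or_and [nAa nAb].
  have [s1 [Ss1 As1]] := colon _ _ Aab nAa.
  rewrite mulC in As1.
  have [s2 [Ss2 As2]] := colon _ _ As1 nAb.
  exact: dA As2 (Sm _ _ Ss2 Ss1).
have nA1 : ~ A one by move=> /(closed_one clA) /(_ s0) /dA.
exists A; split; last by split.
split; first exact: closed_hyperideal.
split; first by exists s0 => /dA.
move=> us sz Aus.
rewrite k_prod // in Aus.
rewrite -sz; exact: prod_split nA1 bin us Aus.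
Qed.

Lemma mul11 : mul one one = one.
Proof. exact: mul1. Qed.

Local Notation fz := (fun p : H * H => mul p.1 p.2).

Lemma prod_zip a b : size a = size b ->
  prod (map fz (zip a b)) = mul (prod a) (prod b).
Proof.
elim: a b => [|x a IH] [|y b] //=; first by rewrite mul11.
move=> [sz]; by rewrite IH // -!mulA (mulCA y).
Qed.

Lemma set_nth_zip a b i : size a = size b -> i < size a ->
  set_nth zr (map fz (zip a b)) i one = map fz (zip (set_nth zr a i one) (set_nth zr b i one)).
Proof.
elim: a b i => [|x a IH] [|y b] [|i] //=.
- by rewrite mul11.
- by move=> [sz] hi; rewrite IH.
Qed.

Lemma th_mul th : endomorphism M N h k one th -> forall a b, th (mul a b) = mul (th a) (th b).
Proof.
move=> [_ [thk th1]] a b.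
by rewrite /mul thk /= ?size_nseq // map_nseq th1.
Qed.

Lemma main_sec th E : endomorphism M N h k one th -> hyperideal M N h k zr E ->
  endo_prime M N h k zr one th E -> endo_prime M N h k zr one th (rad M N h k zr E).
Proof.
move=> TH hE [_ [[u0 nu0] epE]].
have clR : closed (rad M N h k zr E).
  split; first by move=> P pP EP; case: (hyperideal_closed pP.1).
  split; first by move=> x v Rx hv P pP EP; case: (hyperideal_closed pP.1) => _ [Pi _]; exact: Pi (Rx P pP EP) hv.
  split; last by move=> x y Rx P pP EP; case: (hyperideal_closed pP.1) => _ [_ [_ Pm]]; exact: Pm (Rx P pP EP).
  move=> s sz Rs w hs P pP EP; case: (hyperideal_closed pP.1) => _ [_ [Ph _]].
  by apply: (Ph s sz) hs => j hj; apply: Rs.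
split; first exact: closed_hyperideal.
split.
  have [|||Q [pQ [EQ dQ]]] := @exists_prime E (fun x => x = one) hE.
  - by move=> x y -> ->; rewrite mul11.
  - by exists one.
  - move=> x Ex ex; rewrite ex in Ex; apply: nu0.
    exact: closed_one (hyperideal_closed hE) Ex u0.
  by exists one => R1; exact: dQ one (R1 Q pQ EQ) erefl.
move=> us sz Rk.
apply: NNPP => no.
have nA : forall i, i < N -> ~ rad M N h k zr E (nth zr us i) /\
                       ~ rad M N h k zr E (th (k (set_nth zr us i one))).
  by move=> i hi; split => hR; apply: no; exists i => //; [left|right].
pose dom y u := forall P, nary_prime M N h k zr P -> (forall x, E x -> P x) -> P y -> P u.
pose S := fun x => exists vs, size vs = N /\ x = k vs /\ forall i, i < N ->
   dom (nth zr vs i) (nth zr us i) /\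
   dom (th (k (set_nth zr vs i one))) (th (k (set_nth zr us i one))).
have dom_mul : forall a b u, dom a u -> dom b u -> dom (mul a b) u.
  by move=> a b u da db P pP EP /(prime_mul pP) [/da|/db]; apply.
have [|||Q [pQ [EQ dQ]]] := @exists_prime E S hE.
- move=> x y [vs [szv [-> hv]]] [vs' [szv' [-> hv']]].
  have szz : size vs = size vs' by rewrite szv szv'.
  exists (map fz (zip vs vs')).
  have szw : size (map fz (zip vs vs')) = N by rewrite size_map size_zip szv szv' minnn.
  split; first exact: szw.
  split; first by rewrite k_prod // k_prod // k_prod // prod_zip.
  move=> i hi; split.
    rewrite (nth_map (zr, zr)); last by rewrite size_zip szv szv' minnn.
    rewrite nth_zip //=; apply: dom_mul; [exact: (hv i hi).1 | exact: (hv' i hi).1].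
  have hi' : i < size vs by rewrite szv.
  have szs : forall l, size l = N -> size (set_nth zr l i one) = N.
    by move=> l hl; rewrite size_set_nth hl; apply/maxn_idPr.
  rewrite set_nth_zip // k_prod; last by rewrite size_map size_zip (szs _ szv) (szs _ szv') minnn.
  rewrite prod_zip; last by rewrite (szs _ szv) (szs _ szv').
  rewrite -!k_prod ?szs // (th_mul TH).
  by apply: dom_mul; [exact: (hv i hi).2 | exact: (hv' i hi).2].
- by exists (k us), us; split=> //; split=> // i hi; split=> P _ _.
- move=> x Ex [vs [szv [ex hv]]]; rewrite ex in Ex.
  have [i hi [Ei|Ei]] := epE vs szv Ex.
  + apply: (nA i hi).1 => P pP EP; apply: (hv i hi).1 => //; exact: EP.
  + apply: (nA i hi).2 => P pP EP; apply: (hv i hi).2 => //; exact: EP.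
apply: dQ (Rk Q pQ EQ) _.
by exists us; split=> //; split=> // i hi; split=> P _ _.
Qed.

End Ring.

Theorem mainTheorem1 (H : Type) (m n : nat) (h : seq H -> H -> Prop)
  (k : seq H -> H) (zr one : H) (th : H -> H) (E : H -> Prop) :
  1 < m -> 1 < n ->
  krasner_hyperring m n h k zr one ->
  endomorphism m n h k one th ->
  hyperideal m n h k zr E -> proper_subset E ->
  endo_prime m n h k zr one th E ->
  endo_prime m n h k zr one th (rad m n h k zr E).
Proof.
case: m => [|[|m']] // _; case: n => [|[|n']] // _.
move=> KR TH hE _ epE.
exact: (main_sec KR TH hE epE).
Qed.
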